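(* Let $\lambda>0$ be the wavelength, let $N\ge 1$ be an integer, let $\delta=\lambda/2$, let $\Delta\ge 0$, and set $\overline{\Delta}=\frac{\Delta+(N-1)\delta}{2}$. Let $z>0$ and $F>0$ with $z\neq F$, and define $$\hat{G}_2=\frac{1}{(2N\delta^2)^2}\Bigg|\int_{-\frac{N\delta}{2}}^{\frac{N\delta}{2}}\int_{-\frac{\delta}{2}}^{\frac{\delta}{2}} e^{\mathrm{i}\frac{2\pi}{\lambda}\left(\frac{(x-\overline{\Delta})^2}{2F}+\frac{y^2}{2F}\right)}e^{-\mathrm{i}\frac{2\pi}{\lambda}\left(\frac{(x-\overline{\Delta})^2}{2z}+\frac{y^2}{2z}\right)}dy\,dx$$ $$\qquad\qquad+\int_{-\frac{N\delta}{2}}^{\frac{N\delta}{2}}\int_{-\frac{\delta}{2}}^{\frac{\delta}{2}} e^{\mathrm{i}\frac{2\pi}{\lambda}\left(\frac{(x+\overline{\Delta})^2}{2F}+\frac{y^2}{2F}\right)}e^{-\mathrm{i}\frac{2\pi}{\lambda}\left(\frac{(x+\overline{\Delta})^2}{2z}+\frac{y^2}{2z}\right)}dy\,dx\Bigg|^2 .$$ Let $z_{\rm eff}=\frac{Fz}{|F-z|}$, $a=\frac{\lambda}{8z_{\rm eff}}$, $\beta_1=\sqrt{a}\,N+\sqrt{\frac{2}{\lambda z_{\rm eff}}}\,\overline{\Delta}$ and $\beta_2=\sqrt{a}\,N-\sqrt{\frac{2}{\lambda z_{\rm eff}}}\,\overline{\Delta}$. Then $$\hat{G}_2=\frac{1}{(2Na)^2}\left(C^2(\sqrt{a})+S^2(\sqrt{a})\right)\left(\left(C(\beta_1)+C(\beta_2)\right)^2+\left(S(\beta_1)+S(\beta_2)\right)^2\right),$$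 where $C$ and $S$ are the Fresnel integrals.
   Context: The Fresnel integrals are $C(u)=\int_0^u\cos\left(\frac{\pi t^2}{2}\right)dt$ and $S(u)=\int_0^u\sin\left(\frac{\pi t^2}{2}\right)dt$; $\mathrm{i}$ is the imaginary unit. Physically, $\hat{G}_2$ is the (Fresnel-approximated) normalized array gain of a modular linear array consisting of two collinear uniform linear arrays of $N$ antennas each (antenna side $\delta$) along the $x$-axis separated by $\Delta$, receiving from a transmitter at $(0,0,z)$ with matched filtering focused at $(0,0,F)$. *)

(* Defs.v *)
From Stdlib Require Import Reals.
From Coquelicot Require Import Coquelicot.
Open Scope R_scope.

Definition expi (t : R) : C := (cos t, sin t).

Definition FresnelC (u : R) : R := RInt (fun t => cos (PI * t ^ 2 / 2)) 0 u.
Definition FresnelS (u : R) : R := RInt (fun t => sin (PI * t ^ 2 / 2)) 0 u.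

(* integrand of one sub-array, shifted by s (s = -Delta_bar or +Delta_bar) *)
Definition integrand (lambda z F s x y : R) : C :=
  Cmult (expi ((2 * PI / lambda) * ((x + s) ^ 2 / (2 * F) + y ^ 2 / (2 * F))))
        (expi (- ((2 * PI / lambda) * ((x + s) ^ 2 / (2 * z) + y ^ 2 / (2 * z))))).

Definition ula_integral (lambda : R) (N : nat) (z F s : R) : C :=
  let delta := lambda / 2 in
  @RInt C_R_CompleteNormedModule (fun x => @RInt C_R_CompleteNormedModule (fun y => integrand lambda z F s x y)
                      (- delta / 2) (delta / 2))
       (- (INR N * delta) / 2) (INR N * delta / 2).

Definition Delta_bar (lambda : R) (N : nat) (Delta : R) : R :=
  (Delta + (INR N - 1) * (lambda / 2)) / 2.

Definition G2hat (lambda : R) (N : nat) (Delta z F : R) : R :=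
  let delta := lambda / 2 in
  let Db := Delta_bar lambda N Delta in
  / (2 * INR N * delta ^ 2) ^ 2 *
  (Cmod (Cplus (ula_integral lambda N z F (- Db))
               (ula_integral lambda N z F Db))) ^ 2.

(* Main.v *)
Require Import Defs.
From Stdlib Require Import Reals Lra Lia.
From Coquelicot Require Import Coquelicot.
Open Scope R_scope.

Lemma expi_add x y : expi (x + y) = Cmult (expi x) (expi y).
Proof. unfold expi, Cmult; simpl. rewrite cos_plus, sin_plus. f_equal; ring. Qed.

Lemma isC (f : R -> C) a b (l1 l2 : R) :
  is_RInt (fun t => fst (f t)) a b l1 -> is_RInt (fun t => snd (f t)) a b l2 ->
  @is_RInt C_R_CompleteNormedModule f a b (l1, l2).
Proof. intros H1 H2. exact (is_RInt_fct_extend_pair (U:=R_NormedModule) (V:=R_NormedModule) f a b l1 l2 H1 H2). Qed.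

Lemma isC_fst (f : R -> C) a b (l : C) :
  @is_RInt C_R_CompleteNormedModule f a b l -> is_RInt (fun t => fst (f t)) a b (fst l).
Proof. intros H. exact (is_RInt_fct_extend_fst (U:=R_NormedModule) (V:=R_NormedModule) f a b l H). Qed.
Lemma isC_snd (f : R -> C) a b (l : C) :
  @is_RInt C_R_CompleteNormedModule f a b l -> is_RInt (fun t => snd (f t)) a b (snd l).
Proof. intros H. exact (is_RInt_fct_extend_snd (U:=R_NormedModule) (V:=R_NormedModule) f a b l H). Qed.

Lemma lin2 (f g : R -> R) a b l1 l2 p q :
  is_RInt f a b l1 -> is_RInt g a b l2 ->
  is_RInt (fun t => p * f t + q * g t) a b (p * l1 + q * l2).
Proof. intros H1 H2. apply (is_RInt_plus (V:=R_NormedModule)).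
  apply (is_RInt_scal (V:=R_NormedModule) f a b p l1 H1).
  apply (is_RInt_scal (V:=R_NormedModule) g a b q l2 H2). Qed.

Lemma is_RInt_Cmult (w : C) (f : R -> C) a b (l : C) :
  @is_RInt C_R_CompleteNormedModule f a b l ->
  @is_RInt C_R_CompleteNormedModule (fun t => Cmult w (f t)) a b (Cmult w l).
Proof. intros H. destruct w as [w1 w2]. 
  pose proof (isC_fst _ _ _ _ H) as H1. pose proof (isC_snd _ _ _ _ H) as H2.
  unfold Cmult. simpl. apply isC; simpl.
  - replace (w1 * fst l - w2 * snd l) with (w1 * fst l + - w2 * snd l) by ring.
    eapply is_RInt_ext; [| exact (lin2 _ _ _ _ _ _ w1 (- w2) H1 H2)]. intros; simpl; ring.
  - replace (w1 * snd l + w2 * fst l) with (w2 * fst l + w1 * snd l) by ring.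
    eapply is_RInt_ext; [| exact (lin2 _ _ _ _ _ _ w2 w1 H1 H2)]. intros; simpl; ring.
Qed.

Lemma fres_gen (g : R -> R) (Hg : forall x, continuous g x) L u v : 0 < L ->
  is_RInt (fun t => g (t / L)) u v (L * (RInt g 0 (v / L) - RInt g 0 (u / L))).
Proof.
  intros HL.
  assert (ex : forall p q, ex_RInt g p q) by (intros; apply (ex_RInt_continuous (V:=R_CompleteNormedModule)); intros; apply Hg).
  assert (H := RInt_correct g (/L * u + 0) (/L * v + 0) (ex _ _)).
  assert (H2 := is_RInt_comp_lin g (/L) 0 u v _ H).
  assert (H3 := is_RInt_scal (V:=R_NormedModule) _ u v L _ H2).
  eapply is_RInt_ext; [| replace (L * (RInt g 0 (v / L) - RInt g 0 (u / L))) with (scal L (RInt g (/ L * u + 0) (/ L * v + 0))); [exact H3|] ].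
  - intros x _. simpl. unfold scal; simpl; unfold mult; simpl. replace (/ L * x + 0) with (x / L) by (field; lra). field. lra.
  - unfold scal; simpl; unfold mult; simpl. f_equal.
    replace (/ L * u + 0) with (u / L) by (field; lra). replace (/ L * v + 0) with (v / L) by (field; lra).
    rewrite <- (RInt_Chasles g 0 (u/L) (v/L)) by apply ex. unfold plus; simpl. generalize (RInt g 0 (u / L)) (RInt g (u / L) (v / L)). intros A B. change R in A, B. lra.
Qed.

Lemma cont_cos x : continuous (fun t => cos (PI * t ^ 2 / 2)) x.
Proof. apply (ex_derive_continuous (V:=R_NormedModule)). auto_derive; auto. Qed.
Lemma cont_sin x : continuous (fun t => sin (PI * t ^ 2 / 2)) x.
Proof. apply (ex_derive_continuous (V:=R_NormedModule)). auto_derive; auto. Qed.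

Lemma even_odd (g : R -> R) (Hg : forall x, continuous g x) (He : forall x, g (- x) = g x) u :
  RInt g 0 (- u) = - RInt g 0 u.
Proof.
  assert (ex : forall p q, ex_RInt g p q) by (intros; apply (ex_RInt_continuous (V:=R_CompleteNormedModule)); intros; apply Hg).
  assert (H := RInt_correct g (-1 * 0 + 0) (-1 * u + 0) (ex _ _)).
  assert (H2 := is_RInt_comp_lin g (-1) 0 0 u _ H).
  assert (H3 := is_RInt_unique _ _ _ _ H2).
  replace (-1 * 0 + 0) with 0 in H3 by ring. replace (-1 * u + 0) with (- u) in H3 by ring.
  rewrite <- H3. rewrite <- (RInt_opp (V:=R_CompleteNormedModule)) by apply ex.
  apply RInt_ext. intros x _. unfold scal; simpl; unfold mult, opp; simpl.
  replace (-1 * x + 0) with (- x) by ring. rewrite He. ring.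
Qed.

Lemma FC_odd u : FresnelC (- u) = - FresnelC u.
Proof. apply even_odd. apply cont_cos. intros; f_equal; f_equal; ring. Qed.
Lemma FS_odd u : FresnelS (- u) = - FresnelS u.
Proof. apply even_odd. apply cont_sin. intros; f_equal; f_equal; ring. Qed.

Definition EE (L sg u v : R) : C :=
  (L * (FresnelC (v / L) - FresnelC (u / L)), sg * (L * (FresnelS (v / L) - FresnelS (u / L)))).

Lemma lemE c L sg u v : 0 < L -> (sg = 1 \/ sg = -1) -> c = sg * PI / (2 * L ^ 2) ->
  @is_RInt C_R_CompleteNormedModule (fun t => expi (c * t ^ 2)) u v (EE L sg u v).
Proof.
  intros HL Hs Hc. unfold EE. apply isC.
  - eapply is_RInt_ext; [| apply (fres_gen _ cont_cos L u v HL)].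
    intros x _. cbv beta. unfold expi; cbn [fst snd]. replace (c * x ^ 2) with (sg * (PI * (x / L) ^ 2 / 2)) by (subst; field; lra).
    destruct Hs as [-> | ->]. rewrite Rmult_1_l; reflexivity. replace (-1 * (PI * (x / L) ^ 2 / 2)) with (- (PI * (x / L) ^ 2 / 2)) by ring.
    rewrite cos_neg; reflexivity.
  - assert (H := is_RInt_scal (V:=R_NormedModule) _ u v sg _ (fres_gen _ cont_sin L u v HL)).
    eapply is_RInt_ext; [| exact H].
    intros x _. cbv beta. unfold expi; cbn [fst snd].
    assert (E : c * x ^ 2 = sg * (PI * (x / L) ^ 2 / 2)) by (subst; field; lra). rewrite E.
    change (scal sg (sin (PI * (x / L) ^ 2 / 2))) with (sg * sin (PI * (x / L) ^ 2 / 2)).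
    destruct Hs as [-> | ->]. rewrite !Rmult_1_l; reflexivity. replace (-1 * (PI * (x / L) ^ 2 / 2)) with (- (PI * (x / L) ^ 2 / 2)) by ring.
    rewrite sin_neg. match goal with |- ?a = ?b => change (@eq R a b) end. ring.
Qed.

Lemma dbl c L sg a1 b1 a2 b2 s : 0 < L -> (sg = 1 \/ sg = -1) -> c = sg * PI / (2 * L ^ 2) ->
  @RInt C_R_CompleteNormedModule (fun x => @RInt C_R_CompleteNormedModule
      (fun y => expi (c * ((x + s) ^ 2 + y ^ 2))) a2 b2) a1 b1
  = Cmult (EE L sg a2 b2) (EE L sg (a1 + s) (b1 + s)).
Proof.
  intros HL Hs Hc.
  rewrite (RInt_ext (V:=C_R_CompleteNormedModule) _ (fun x => Cmult (EE L sg a2 b2) (expi (c * (x + s) ^ 2)))).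
  - apply is_RInt_unique. apply is_RInt_Cmult.
    assert (H := lemE c L sg (1 * a1 + s) (1 * b1 + s) HL Hs Hc).
    assert (H2 := is_RInt_comp_lin (V:=C_R_NormedModule) _ 1 s a1 b1 _ H).
    replace (1 * a1 + s) with (a1 + s) in H2 by ring. replace (1 * b1 + s) with (b1 + s) in H2 by ring.
    eapply is_RInt_ext; [| exact H2]. intros x _. simpl.
    replace (1 * x + s) with (x + s) by ring. unfold scal; simpl. unfold prod_scal; simpl.
    unfold scal; simpl; unfold mult; simpl. unfold expi. f_equal; ring.
  - intros x _. rewrite Cmult_comm. apply is_RInt_unique.
    eapply is_RInt_ext; [| apply is_RInt_Cmult; apply (lemE c L sg a2 b2 HL Hs Hc)].
    intros y _. simpl. rewrite <- expi_add. f_equal. ring.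
Qed.

Lemma Cmod_sq (p : C) : Cmod p ^ 2 = fst p ^ 2 + snd p ^ 2.
Proof. unfold Cmod. rewrite pow2_sqrt; [ring | nra]. Qed.

Theorem theorem2 (lambda : R) (N : nat) (Delta z F : R) :
  0 < lambda -> (1 <= N)%nat -> 0 <= Delta -> 0 < z -> 0 < F -> z <> F ->
  let Db := Delta_bar lambda N Delta in
  let zeff := F * z / Rabs (F - z) in
  let a := lambda / (8 * zeff) in
  let beta1 := sqrt a * INR N + sqrt (2 / (lambda * zeff)) * Db in
  let beta2 := sqrt a * INR N - sqrt (2 / (lambda * zeff)) * Db in
  G2hat lambda N Delta z F =
  / (2 * INR N * a) ^ 2
  * (FresnelC (sqrt a) ^ 2 + FresnelS (sqrt a) ^ 2)
  * ((FresnelC beta1 + FresnelC beta2) ^ 2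
     + (FresnelS beta1 + FresnelS beta2) ^ 2).
Proof.
  intros Hl HN HD Hz HF Hzf Db zeff a beta1 beta2.
  assert (HNp : 0 < INR N) by (apply lt_0_INR; lia).
  assert (Habs : 0 < Rabs (F - z)) by (apply Rabs_pos_lt; lra).
  assert (Hze : 0 < zeff) by (unfold zeff; apply Rdiv_lt_0_compat; nra).
  set (L := sqrt (lambda * zeff / 2)).
  assert (HL : 0 < L) by (apply sqrt_lt_R0; nra).
  assert (HL2 : L ^ 2 = lambda * zeff / 2) by (unfold L; rewrite pow2_sqrt; nra).
  set (sg := if Rlt_dec F z then 1 else -1).
  assert (Hsg : sg = 1 \/ sg = -1) by (unfold sg; destruct (Rlt_dec F z); auto).
  set (c := sg * PI / (2 * L ^ 2)).
  assert (Hc : c = PI * (z - F) / (lambda * F * z)).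
  { unfold c. rewrite HL2. unfold zeff, sg. destruct (Rlt_dec F z).
    - rewrite Rabs_left by lra. field. repeat split; lra.
    - rewrite Rabs_right by lra. field. repeat split; lra. }
  assert (Hint : forall s x y, integrand lambda z F s x y = expi (c * ((x + s) ^ 2 + y ^ 2))).
  { intros s x y. unfold integrand. rewrite <- expi_add. f_equal. rewrite Hc. field. repeat split; lra. }
  assert (Hula : forall s, ula_integral lambda N z F s =
     Cmult (EE L sg (- (lambda / 2) / 2) (lambda / 2 / 2))
           (EE L sg (- (INR N * (lambda / 2)) / 2 + s) (INR N * (lambda / 2) / 2 + s))).
  { intros s. unfold ula_integral. cbv zeta. rewrite <- (dbl c L sg _ _ _ _ s HL Hsg eq_refl).
    apply (RInt_ext (V:=C_R_CompleteNormedModule)). intros x _. apply (RInt_ext (V:=C_R_CompleteNormedModule)). intros y _. apply Hint. }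
  assert (Ha : a = lambda ^ 2 / (16 * L ^ 2)).
  { unfold a. rewrite HL2. field. lra. }
  assert (Hsa : sqrt a = lambda / 4 / L).
  { rewrite Ha. replace (lambda ^ 2 / (16 * L ^ 2)) with (Rsqr (lambda / 4 / L)) by (unfold Rsqr; field; lra).
    apply sqrt_Rsqr. apply Rlt_le, Rdiv_lt_0_compat; lra. }
  assert (Hs2 : sqrt (2 / (lambda * zeff)) = 1 / L).
  { assert (E : 2 / (lambda * zeff) = Rsqr (1 / L)).
    { unfold Rsqr. replace (1 / L * (1 / L)) with (1 / L ^ 2) by (field; lra). rewrite HL2. field. split; lra. }
    rewrite E.
    apply sqrt_Rsqr. apply Rlt_le, Rdiv_lt_0_compat; lra. }
  unfold G2hat. cbv zeta. fold Db. rewrite !Hula.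
  unfold EE. rewrite Cmod_sq.
  unfold beta1, beta2. rewrite Hsa, Hs2.
  replace (- (lambda / 2) / 2 / L) with (- (lambda / 4 / L)) by (field; lra).
  replace (lambda / 2 / 2 / L) with (lambda / 4 / L) by (field; lra).
  replace ((- (INR N * (lambda / 2)) / 2 + - Db) / L) with (- (lambda / 4 / L * INR N + 1 / L * Db)) by (field; lra).
  replace ((INR N * (lambda / 2) / 2 + - Db) / L) with (lambda / 4 / L * INR N - 1 / L * Db) by (field; lra).
  replace ((- (INR N * (lambda / 2)) / 2 + Db) / L) with (- (lambda / 4 / L * INR N - 1 / L * Db)) by (field; lra).
  replace ((INR N * (lambda / 2) / 2 + Db) / L) with (lambda / 4 / L * INR N + 1 / L * Db) by (field; lra).
  rewrite !FC_odd, !FS_odd. rewrite Ha.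
  unfold Cmult, Cplus; cbn [fst snd].
  destruct Hsg as [-> | ->]; field; repeat split; lra.
Qed.
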